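(* In the algorithm GBGC, equip $G$ with the relation: $(\mathbf u',f')<(\mathbf u,f)$ iff, with $L=\mathrm{lcm}(\mathrm{lpp}(\mathbf u),\mathrm{lpp}(\mathbf u'))$, $t'=L/\mathrm{lpp}(\mathbf u')$, $t=L/\mathrm{lpp}(\mathbf u)$, either $\mathrm{lpp}(t'f')\prec\mathrm{lpp}(tf)$, or $\mathrm{lpp}(t'f')=\mathrm{lpp}(tf)$ and $(\mathbf u',f')$ was added to $G$ later than $(\mathbf u,f)$. Then: (i) whenever a selected critical pair $[t_f(\mathbf u,f),t_g(\mathbf v,g)]$ is regular and not gen-rewritable by $G$ and its S-polynomial reduces to $(\mathbf w,h)$, one has $(\mathbf w,h)<(\mathbf u,f)$ (admissibility); (ii) if $(\mathbf u,f)\in G$, $f\ne 0$, $t$ a power product, and $t(\mathbf u,f)$ is reducible by $G$ and reduces to $(\mathbf w,h)$ for which there is $(\mathbf u',f')\in G$ with $\mathrm{lpp}(\mathbf u')\mid\mathrm{lpp}(\mathbf w)$, $\mathrm{lpp}(f')\mid\mathrm{lpp}(h)$, $\mathrm{lpp}(\mathbf w)/\mathrm{lpp}(\mathbf u')=\mathrm{lpp}(h)/\mathrm{lpp}(f')$ and $\mathrm{lc}(\mathbf w)/\mathrm{lc}(\mathbf u')=\mathrm{lc}(h)/\mathrm{lc}(f')$ (eventually super top-reducible), then $t(\mathbf u,f)$ is gen-rewritable by $G$ with respect to this relation.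
   Context: Setting: $R=K[x_1,\dots,x_n]$, $f_1,\dots,f_m\in R$, $\mathbf M=\{(\mathbf u,f)\in R^m\times R:\mathbf u\cdot(f_1,\dots,f_m)=f\}$, $\mathbf e_i$ unit vectors, arbitrary term orders $\prec$ on $R$ and on $R^m$, $\mathrm{lpp}$/$\mathrm{lc}$ leading power product (term)/coefficient, $\mathrm{lpp}(0)=0$ below all nonzero terms. Critical pair $[t_f(\mathbf u,f),t_g(\mathbf v,g)]$ of $(\mathbf u,f),(\mathbf v,g)$ ($f,g\ne0$): $t_f=\mathrm{lcm}(\mathrm{lpp}(f),\mathrm{lpp}(g))/\mathrm{lpp}(f)$, $t_g$ likewise, with $\mathrm{lpp}(t_f\mathbf u)\succeq\mathrm{lpp}(t_g\mathbf v)$; S-polynomial $t_f(\mathbf u,f)-c\,t_g(\mathbf v,g)$, $c=\mathrm{lc}(f)/\mathrm{lc}(g)$; regular if $\mathrm{lpp}(t_f\mathbf u)\succ\mathrm{lpp}(t_g\mathbf v)$. Gen-rewritable: $t(\mathbf u,f)$ ($(\mathbf u,f)\in B$, $f\ne0$) is gen-rewritable by $B$ if some $(\mathbf u',f')\in B$ has $\mathrm{lpp}(\mathbf u')\mid\mathrm{lpp}(t\mathbf u)$ and $(\mathbf u',f')<(\mathbf u,f)$; a critical pair is gen-rewritable if either component is. Reducibility/reduction of $(\mathbf u,f)$ by $B$: a one-step reduction replaces it by $(\mathbf u-ct\mathbf v,f-ctg)$ for some $(\mathbf v,g)\in B$, $g\ne0$, $\mathrm{lpp}(g)\mid\mathrm{lpp}(f)$,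 $c=\mathrm{lc}(f)/\mathrm{lc}(g)$, $t=\mathrm{lpp}(f)/\mathrm{lpp}(g)$, provided $\mathrm{lpp}(\mathbf u-ct\mathbf v)=\mathrm{lpp}(\mathbf u)$; reducing means repeating until no step applies. Algorithm GBGC: start with $G=\{(\mathbf e_i,f_i)\}$, CPairs = all critical pairs of these, then add $(f_j\mathbf e_i-f_i\mathbf e_j,0)$ ($i<j$) to $G$; while CPairs nonempty, remove any pair; if it is regular and not gen-rewritable by $G$, reduce its S-polynomial by $G$ to $(\mathbf w,h)$; if $h\ne0$, add critical pairs of $(\mathbf w,h)$ with all $(\mathbf w',h')\in G$, $h'\ne0$, to CPairs and add $(h\mathbf e_i-f_i\mathbf w,0)$, $i=1..m$, to $G$; add $(\mathbf w,h)$ to $G$. *)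

(* Defs.v *)
From HB Require Import structures.
From mathcomp Require Import all_boot all_order all_algebra.
From Stdlib Require Import ClassicalEpsilon Permutation.
Set Implicit Arguments. Unset Strict Implicit. Unset Printing Implicit Defensive.
Import GRing.Theory.
Local Open Scope ring_scope.

Definition decP (P : Prop) : bool :=
  if excluded_middle_informative P then true else false.

Section Monomials.
Variable n : nat.
Definition mon := {ffun 'I_n -> nat}.
Definition mone : mon := [ffun _ => 0%N].
Definition mmul (a b : mon) : mon := [ffun i => (a i + b i)%N].
Definition mdvd (a b : mon) : bool := [forall i, (a i <= b i)%N].
(* mquo b a = b / a (meaningful when a | b) *)
Definition mquo (b a : mon) : mon := [ffun i => (b i - a i)%N].
Definition mlcm (a b : mon) : mon := [ffun i => maxn (a i) (b i)].
Definition divs (a : mon) : seq mon :=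
  let B := (\max_(i < n) a i).+1 in
  filter (fun d => mdvd d a)
    (map (fun g : {ffun 'I_n -> 'I_B} => ([ffun i => nat_of_ord (g i)] : mon))
         (enum {ffun 'I_n -> 'I_B})).
End Monomials.

Definition strict_total (T : eqType) (lt : rel T) : Prop :=
  [/\ irreflexive lt, transitive lt & forall a b, a != b -> lt a b || lt b a].

Definition term_order (n : nat) (lt : rel (mon n)) : Prop :=
  [/\ strict_total lt,
      (forall a b t, lt a b -> lt (mmul t a) (mmul t b))
    & (forall a, a != mone n -> lt (mone n) a)].

(* module terms t e_i, represented as (i, t) *)
Definition tmul (n m : nat) (t : mon n) (x : 'I_m * mon n) : 'I_m * mon n :=
  (x.1, mmul t x.2).
Definition tdvd (n m : nat) (x y : 'I_m * mon n) : bool :=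
  (x.1 == y.1) && mdvd x.2 y.2.

Definition mod_term_order (n m : nat) (lt : rel ('I_m * mon n)) : Prop :=
  [/\ strict_total lt,
      (forall x y t, lt x y -> lt (tmul t x) (tmul t y))
    & (forall x t, t != mone n -> lt x (tmul t x))].

(* leading term of a coefficient function c w.r.t. lt; None for zero
   (lpp(0) = 0, below all nonzero terms) *)
Definition is_lead (K : fieldType) (T : eqType) (lt : rel T) (c : T -> K) (a : T) :=
  c a != 0 /\ forall b, c b != 0 -> b != a -> lt b a.

Definition lead (K : fieldType) (T : eqType) (lt : rel T) (c : T -> K) : option T :=
  match excluded_middle_informative (exists a, is_lead lt c a) with
  | left H => Some (proj1_sig (constructive_indefinite_description _ H))
  | right _ => None
  end.

Definition olt (T : Type) (lt : rel T) (a b : option T) : bool :=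
  match a, b with
  | None, Some _ => true
  | Some x, Some y => lt x y
  | _, _ => false
  end.

Definition odvd (n m : nat) (a b : option ('I_m * mon n)) : bool :=
  match a, b with Some x, Some y => tdvd x y | _, _ => false end.

Section GBGC.
Variables (K : fieldType) (n m : nat).
Variables (lt : rel (mon n)) (ltM : rel ('I_m * mon n)).
Variable F : 'I_m -> (mon n -> K).

Definition mpoly := mon n -> K.
Definition mvec := 'I_m -> mpoly.
Definition elt := (mvec * mpoly)%type.

Definition pzero : mpoly := fun _ => 0.
Definition pone : mpoly := fun a => if a == mone n then 1 else 0.
Definition pnz (p : mpoly) : bool := decP (exists a, p a != 0).
Definition finsupp (p : mpoly) : Prop :=
  exists s : seq (mon n), forall a, p a != 0 -> a \in s.
Definition psub (p q : mpoly) : mpoly := fun a => p a - q a.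
Definition pmulm (c : K) (t : mon n) (p : mpoly) : mpoly :=
  fun a => if mdvd t a then c * p (mquo a t) else 0.
Definition pmul (p q : mpoly) : mpoly :=
  fun a => \sum_(d <- divs a) p d * q (mquo a d).

Definition vsub (u v : mvec) : mvec := fun i => psub (u i) (v i).
Definition vmulm (c : K) (t : mon n) (u : mvec) : mvec :=
  fun i => pmulm c t (u i).
Definition vmulp (p : mpoly) (u : mvec) : mvec := fun i => pmul p (u i).
Definition vsingle (i : 'I_m) (p : mpoly) : mvec :=
  fun k => if k == i then p else pzero.
Definition unitv (i : 'I_m) : mvec := vsingle i pone.

Definition lpp (p : mpoly) : option (mon n) := lead lt p.
Definition lc (p : mpoly) : K :=
  match lpp p with Some a => p a | None => 0 end.
Definition vlpp (u : mvec) : option ('I_m * mon n) :=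
  lead ltM (fun x => u x.1 x.2).
Definition vlc (u : mvec) : K :=
  match vlpp u with Some x => u x.1 x.2 | None => 0 end.

Definition lppd (p : mpoly) : mon n := odflt (mone n) (lpp p).

Definition zelt : elt := (fun _ => pzero, pzero).
Definition Gat (G : seq elt) (j : nat) : elt := nth zelt G j.

(* The relation of the theorem, on positions in G (G is listed in order of
   insertion, so a larger position means "added later"): G_j < G_k. *)
Definition gbrel (G : seq elt) (j k : nat) : Prop :=
  match vlpp (Gat G j).1, vlpp (Gat G k).1 with
  | Some x', Some x =>
      let L := mlcm x.2 x'.2 in
      let t' := mquo L x'.2 in
      let t := mquo L x.2 in
      let a' := lpp (pmulm 1 t' (Gat G j).2) in
      let a := lpp (pmulm 1 t (Gat G k).2) in
      olt lt a' a \/ (a' = a /\ (k < j)%N)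
  | _, _ => False
  end.

Definition genrew (G : seq elt) (t : mon n) (k : nat) : Prop :=
  (k < size G)%N /\
  exists j, [/\ (j < size G)%N,
    odvd (vlpp (Gat G j).1) (vlpp (vmulm 1 t (Gat G k).1)) & gbrel G j k].

(* critical pairs: (k, l) stands for [t_f G_k, t_g G_l] *)
Definition cpt (G : seq elt) (k l : nat) : mon n :=
  mquo (mlcm (lppd (Gat G k).2) (lppd (Gat G l).2)) (lppd (Gat G k).2).
Definition cpsig (G : seq elt) (k l : nat) : option ('I_m * mon n) :=
  vlpp (vmulm 1 (cpt G k l) (Gat G k).1).
(* orient so that lpp(t_f u) >= lpp(t_g v) *)
Definition make_cp (G : seq elt) (k l : nat) : nat * nat :=
  if olt ltM (cpsig G k l) (cpsig G l k) then (l, k) else (k, l).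
Definition cp_regular (G : seq elt) (k l : nat) : bool :=
  olt ltM (cpsig G l k) (cpsig G k l).
Definition cp_genrew (G : seq elt) (k l : nat) : Prop :=
  genrew G (cpt G k l) k \/ genrew G (cpt G l k) l.
Definition spoly (G : seq elt) (k l : nat) : elt :=
  let c := lc (Gat G k).2 / lc (Gat G l).2 in
  (vsub (vmulm 1 (cpt G k l) (Gat G k).1) (vmulm c (cpt G l k) (Gat G l).1),
   psub (pmulm 1 (cpt G k l) (Gat G k).2) (pmulm c (cpt G l k) (Gat G l).2)).

Definition redstep (B : seq elt) (x y : elt) : Prop :=
  exists j a b, [/\ (j < size B)%N, pnz (Gat B j).2,
    lpp x.2 = Some a, lpp (Gat B j).2 = Some b & mdvd b a] /\
    let c := lc x.2 / lc (Gat B j).2 in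
    let t := mquo a b in
    let u' := vsub x.1 (vmulm c t (Gat B j).1) in
    vlpp u' = vlpp x.1 /\ y = (u', psub x.2 (pmulm c t (Gat B j).2)).

Inductive reduces (B : seq elt) : elt -> elt -> Prop :=
| red_done x : (forall z, ~ redstep B x z) -> reduces B x x
| red_more x y z : redstep B x y -> reduces B y z -> reduces B x z.

Definition init_syz : seq elt :=
  map (fun p : 'I_m * 'I_m => (vsub (vsingle p.1 (F p.2)) (vsingle p.2 (F p.1)), pzero))
    (filter (fun p : 'I_m * 'I_m => (p.1 < p.2)%N)
       [seq (i, j) | i <- enum 'I_m, j <- enum 'I_m]).
Definition new_syz (w : mvec) (h : mpoly) : seq elt :=
  [seq (vsub (vsingle i h) (vmulp (F i) w), pzero) | i <- enum 'I_m].

Definition init_basis : seq elt := [seq (unitv i, F i) | i <- enum 'I_m].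
Definition init_cps : seq (nat * nat) :=
  [seq make_cp init_basis p.1 p.2
  | p <- [seq (i, j) | i <- iota 0 m, j <- iota 0 m]
  & [&& (p.1 < p.2)%N, pnz (Gat init_basis p.1).2 & pnz (Gat init_basis p.2).2]].

Definition rem_at (T : Type) (p : nat) (s : seq T) := take p s ++ drop p.+1 s.

(* states (G, CPairs) reachable by GBGC; the (unspecified) order in which
   the syzygies of one batch are added is arbitrary *)
Inductive reachable : seq elt -> seq (nat * nat) -> Prop :=
| reach_init s : Permutation s init_syz -> reachable (init_basis ++ s) init_cps
| reach_skip G CP p :
    reachable G CP -> (p < size CP)%N ->
    let kl := nth (0%N, 0%N) CP p in
    ~ (cp_regular G kl.1 kl.2 /\ ~ cp_genrew G kl.1 kl.2) ->
    reachable G (rem_at p CP)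
| reach_zero G CP p w h :
    reachable G CP -> (p < size CP)%N ->
    let kl := nth (0%N, 0%N) CP p in
    cp_regular G kl.1 kl.2 -> ~ cp_genrew G kl.1 kl.2 ->
    reduces G (spoly G kl.1 kl.2) (w, h) -> ~~ pnz h ->
    reachable (G ++ [:: (w, h)]) (rem_at p CP)
| reach_new G CP p w h s :
    reachable G CP -> (p < size CP)%N ->
    let kl := nth (0%N, 0%N) CP p in
    cp_regular G kl.1 kl.2 -> ~ cp_genrew G kl.1 kl.2 ->
    reduces G (spoly G kl.1 kl.2) (w, h) -> pnz h ->
    Permutation s (new_syz w h) ->
    let G' := G ++ s ++ [:: (w, h)] in
    reachable G'
      (rem_at p CP ++ [seq make_cp G' (size G' - 1) j
                      | j <- iota 0 (size G) & pnz (Gat G j).2]).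

End GBGC.

(* Main.v *)
Require Import Defs.
From mathcomp Require Import all_boot all_order all_algebra.
From Stdlib Require Import Permutation ClassicalEpsilon.
From mathcomp Require Import zify.
Set Implicit Arguments. Unset Strict Implicit. Unset Printing Implicit Defensive.
Import GRing.Theory.
Local Open Scope ring_scope.

Definition fsup (K : fieldType) (T : eqType) (c : T -> K) : Prop :=
  exists s : seq T, forall a, c a != 0 -> a \in s.

Section Lead.
Variables (K : fieldType) (T : eqType) (lt : rel T).
Hypothesis Hst : strict_total lt.

Lemma lt_irr x : lt x x = false.
Proof. by case: Hst => H _ _; apply: H. Qed.

Lemma lt_tr x y z : lt x y -> lt y z -> lt x z.
Proof. by case: Hst => _ H _ h1 h2; apply: (H y). Qed.

Lemma lt_tot x y : x != y -> lt x y \/ lt y x.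
Proof. by case: Hst => _ _ H /H /orP. Qed.

Lemma lt_neq x y : lt x y -> x != y.
Proof. by move=> h; apply/eqP => e; move: h; rewrite e lt_irr. Qed.

Lemma is_lead_uniq (c : T -> K) a b : is_lead lt c a -> is_lead lt c b -> a = b.
Proof.
move=> [ha Ha] [hb Hb]; apply/eqP; apply: contraT => nab.
have h1 := Hb a ha nab. have h2 : lt b a by apply: (Ha b hb); rewrite eq_sym.
by move: (lt_tr h1 h2); rewrite lt_irr.
Qed.

Lemma leadP (c : T -> K) :
  (lead lt c = None /\ forall a, ~ is_lead lt c a) \/
  exists a, lead lt c = Some a /\ is_lead lt c a.
Proof.
rewrite /lead; destruct (excluded_middle_informative _) as [H|H].
  right; exists (proj1_sig (constructive_indefinite_description _ H)); split => //.
  exact: proj2_sig (constructive_indefinite_description _ H).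
by left; split => // a ha; apply: H; exists a.
Qed.

Lemma lead_Some (c : T -> K) a : is_lead lt c a -> lead lt c = Some a.
Proof.
move=> h; case: (leadP c) => [[_ H]|[b [-> hb]]]; first by case: (H a).
by rewrite (is_lead_uniq hb h).
Qed.

Lemma lead_SomeE (c : T -> K) a : lead lt c = Some a -> is_lead lt c a.
Proof. by case: (leadP c) => [[-> _]|[b [-> hb]]] // [<-]. Qed.

Lemma lead_NoneE (c : T -> K) : lead lt c = None -> forall a, ~ is_lead lt c a.
Proof. by case: (leadP c) => [[_ H]|[b [-> hb]]]. Qed.

Lemma is_lead_ext (c c' : T -> K) a : (forall x, c x = c' x) -> is_lead lt c a -> is_lead lt c' a.
Proof. move=> E [h H]; split; first by rewrite -E. by move=> b; rewrite -E; apply: H. Qed.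

Lemma lead_ext (c c' : T -> K) : (forall x, c x = c' x) -> lead lt c = lead lt c'.
Proof.
move=> E; case: (leadP c) => [[-> H]|[b [-> hb]]].
  case: (leadP c') => [[-> _]|[b [_ hb]]] //.
  by case: (H b); apply: is_lead_ext hb => x; rewrite E.
by rewrite (lead_Some (is_lead_ext E hb)).
Qed.

Lemma lead_below (c : T -> K) a : (forall y, c y != 0 -> lt y a) -> olt lt (lead lt c) (Some a).
Proof.
move=> H; case: (leadP c) => [[-> _]|[b [-> [hb _]]]] //=; exact: H.
Qed.

Lemma max_seq (l : seq T) : l != [::] -> exists x, x \in l /\ forall y, y \in l -> y != x -> lt y x.
Proof.
elim: l => // y l IH _; case: (altP (l =P [::])) => [->|ne].
  by exists y; split; rewrite ?mem_seq1 // => z; rewrite mem_seq1 => /eqP ->; rewrite eqxx.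
have [x [xl Hx]] := IH ne.
case: (boolP (lt y x)) => hyx.
  exists x; split; first by rewrite inE xl orbT.
  move=> z; rewrite inE => /orP [/eqP -> _ //|zl]; exact: Hx.
case: (altP (y =P x)) => [e|yx].
  exists x; split; first by rewrite inE xl orbT.
  move=> z; rewrite inE => /orP [/eqP -> //|zl]; [by rewrite e eqxx|exact: Hx].
have hxy : lt x y by case: (lt_tot yx) => h //; rewrite h in hyx.
exists y; split; first by rewrite inE eqxx.
move=> z; rewrite inE => /orP [/eqP -> //|zl]; first by rewrite eqxx.
move=> _; case: (altP (z =P x)) => [->//|zx]; exact: lt_tr (Hx z zl zx) hxy.
Qed.

Lemma lead_exists (c : T -> K) : fsup c -> forall a0, c a0 != 0 -> exists a, is_lead lt c a.
Proof.
move=> [s Hs] a0 h0.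
have ne : [seq a <- s | c a != 0] != [::].
  apply/eqP => e; have : a0 \in [seq a <- s | c a != 0] by rewrite mem_filter h0 Hs.
  by rewrite e.
have [x [xl Hx]] := max_seq ne.
move: xl; rewrite mem_filter => /andP [hx _].
by exists x; split => // b hb bx; apply: Hx => //; rewrite mem_filter hb Hs.
Qed.

Lemma lead_fin_None (c : T -> K) : fsup c -> lead lt c = None -> forall a, c a = 0.
Proof.
move=> fs hN a; apply/eqP; apply: contraT => ha.
have [b hb] := lead_exists fs ha. by case: (lead_NoneE hN hb).
Qed.

Lemma lead_map (c c' : T -> K) (f : T -> T) :
  (forall x y, lt x y -> lt (f x) (f y)) -> (forall x, c' (f x) = c x) ->
  (forall y, c' y != 0 -> exists x, y = f x) -> lead lt c' = omap f (lead lt c).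
Proof.
move=> mono Ec Ei.
have inj : injective f.
  move=> x y e; apply/eqP; apply: contraT => /lt_tot [] /mono; rewrite e lt_irr //.
case: (leadP c) => [[-> H]|[a [-> [ha Ha]]]] /=.
  case: (leadP c') => [[-> _]|[b [_ [hb Hb]]]] //.
  have [a eb] := Ei _ hb; subst b; case: (H a); split; first by rewrite -Ec.
  move=> x hx xa; case: (lt_tot xa) => // hax.
  have := Hb (f x); rewrite Ec hx => /(_ isT); rewrite (inj_eq inj) xa => /(_ isT) h.
  by move: (lt_tr h (mono _ _ hax)); rewrite lt_irr.
apply: lead_Some; split; first by rewrite Ec.
move=> y hy; have [x ey] := Ei _ hy; subst y; rewrite (inj_eq inj) => xa.
by apply: mono; apply: Ha => //; rewrite -Ec.
Qed.

Lemma olt_trans (a b c : option T) : olt lt a b -> olt lt b c -> olt lt a c.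
Proof. by case: a; case: b; case: c => //= x y z; move=> h1 h2; exact: lt_tr h1 h2. Qed.

End Lead.

Section Mon.
Variable n : nat.
Implicit Types a b t x : mon n.

Lemma mdvdP a b : reflect (forall i : 'I_n, (a i <= b i)%N) (mdvd a b).
Proof. exact: forallP. Qed.

Lemma mon_ext a b : (forall i : 'I_n, a i = b i) -> a = b.
Proof. by move=> h; apply/ffunP. Qed.

Lemma mdvd_mmul t x : mdvd t (mmul t x).
Proof. by apply/mdvdP => i; rewrite ffunE; lia. Qed.

Lemma mquo_mmul t x : mquo (mmul t x) t = x.
Proof. by apply: mon_ext => i; rewrite !ffunE; lia. Qed.

Lemma mmul_quo t a : mdvd t a -> mmul t (mquo a t) = a.
Proof. move/mdvdP => h; apply: mon_ext => i; rewrite !ffunE; have := h i; lia. Qed.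

Lemma mdvd1 a : mdvd (mone n) a.
Proof. by apply/mdvdP => i; rewrite ffunE. Qed.

Lemma mquo1 a : mquo a (mone n) = a.
Proof. by apply: mon_ext => i; rewrite !ffunE; lia. Qed.

Lemma mcancel (lt : rel (mon n)) t a b : term_order lt -> lt (mmul t a) (mmul t b) -> lt a b.
Proof.
move=> [st mono _] h; have [ir tr tot] := st.
case: (altP (a =P b)) => [e|ab]; first by move: h; rewrite e ir.
case/orP: (tot _ _ ab) => // hba.
by move: (tr _ _ _ h (mono _ _ t hba)); rewrite ir.
Qed.

End Mon.

Section Mul.
Variables (K : fieldType) (n m : nat) (lt : rel (mon n)) (ltM : rel ('I_m * mon n)).

Lemma pmulmE c t (p : mpoly K n) a : pmulm c t p a = c * pmulm 1 t p a.
Proof. by rewrite /pmulm; case: ifP; rewrite ?mul1r ?mulr0. Qed.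

Lemma lpp_pmulm t (p : mpoly K n) : term_order lt ->
  lpp lt (pmulm 1 t p) = omap (mmul t) (lpp lt p).
Proof.
move=> [st mono _]; apply: lead_map => //.
- by move=> x y; apply: mono.
- by move=> x; rewrite /pmulm mdvd_mmul mquo_mmul mul1r.
- move=> y; rewrite /pmulm; case: ifP => [h _|]; last by rewrite eqxx.
  by exists (mquo y t); rewrite mmul_quo.
Qed.

Lemma vlpp_vmulm t (u : mvec K n m) : mod_term_order ltM ->
  vlpp ltM (vmulm 1 t u) = omap (tmul t) (vlpp ltM u).
Proof.
move=> [st mono _]; apply: lead_map => //.
- by move=> x y; apply: mono.
- by move=> x; rewrite /vmulm /pmulm /= mdvd_mmul mquo_mmul mul1r.
- move=> [i y]; rewrite /vmulm /pmulm /=; case: ifP => [h _|]; last by rewrite eqxx.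
  by exists (i, mquo y t); rewrite /tmul /= mmul_quo.
Qed.

End Mul.

Section Fin.
Variable K : fieldType.

Lemma fsup_ext (T : eqType) (c c' : T -> K) : (forall a, c a = c' a) -> fsup c -> fsup c'.
Proof. by move=> E [s H]; exists s => a; rewrite -E; apply: H. Qed.

Lemma fsup_sub (T : eqType) (c1 c2 : T -> K) : fsup c1 -> fsup c2 -> fsup (fun a => c1 a - c2 a).
Proof.
move=> [s1 H1] [s2 H2]; exists (s1 ++ s2) => a; rewrite mem_cat.
case: (boolP (c1 a != 0)) => [/H1 -> //|]; case: (boolP (c2 a != 0)) => [/H2 -> //|].
by rewrite orbT.
by rewrite !negbK => /eqP -> /eqP ->; rewrite subrr eqxx.
Qed.

Lemma fsup_img (T T' : eqType) (c : T -> K) (c' : T' -> K) (f : T -> T') :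
  fsup c -> (forall y, c' y != 0 -> exists x, c x != 0 /\ y = f x) -> fsup c'.
Proof.
move=> [s H] Hi; exists (map f s) => y /Hi [x [hx ->]]; apply: map_f; exact: H.
Qed.

Lemma fsup0 (T : eqType) : fsup (fun _ : T => (0 : K)).
Proof. by exists [::] => a; rewrite eqxx. Qed.

Variables (n m : nat).
Definition vfs (u : mvec K n m) := fsup (fun y : 'I_m * mon n => u y.1 y.2).

Lemma fsup_pmulm c t (p : mpoly K n) : fsup p -> fsup (pmulm c t p).
Proof.
move=> fp; apply: (fsup_img (f := mmul t) fp) => y; rewrite /pmulm.
case: ifP => [h|]; last by rewrite eqxx.
move=> hy; exists (mquo y t); rewrite mmul_quo //; split => //.
by apply: contraNneq hy => ->; rewrite mulr0.
Qed.

Lemma fsup_vmulm c t (u : mvec K n m) : vfs u -> vfs (vmulm c t u).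
Proof.
move=> fp; apply: (fsup_img (f := tmul t) fp) => [[i y]]; rewrite /vmulm /pmulm /=.
case: ifP => [h|]; last by rewrite eqxx.
move=> hy; exists (i, mquo y t); rewrite /tmul /= mmul_quo //; split => //.
by apply: contraNneq hy => ->; rewrite mulr0.
Qed.

Lemma fsup_vsingle i (p : mpoly K n) : fsup p -> vfs (vsingle i p).
Proof.
move=> fp; apply: (fsup_img (f := pair i) fp) => [[k y]]; rewrite /vsingle /=.
case: ifP => [/eqP ->|]; last by rewrite eqxx.
by move=> hy; exists y.
Qed.

Lemma pmul_nz (p q : mpoly K n) a : pmul p q a != 0 ->
  exists d, [/\ p d != 0, q (mquo a d) != 0 & mdvd d a].
Proof.
rewrite /pmul.
have : forall d, d \in divs a -> mdvd d a by move=> d; rewrite mem_filter => /andP [].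
elim: (divs a) => [|d l IH] Hd; first by rewrite big_nil eqxx.
rewrite big_cons; case: (boolP (p d * q (mquo a d) != 0)) => [h _|].
  exists d; split; last by apply: Hd; rewrite inE eqxx.
    by apply: contraNneq h => ->; rewrite mul0r.
  by apply: contraNneq h => ->; rewrite mulr0.
rewrite negbK => /eqP ->; rewrite add0r; apply: IH => e he; apply: Hd.
by rewrite inE he orbT.
Qed.

Lemma fsup_pmul (p q : mpoly K n) : fsup p -> fsup q -> fsup (pmul p q).
Proof.
move=> [s1 H1] [s2 H2]; exists [seq mmul x y | x <- s1, y <- s2] => a /pmul_nz [d [h1 h2 h3]].
by rewrite -(mmul_quo h3); apply: allpairs_f; [apply: H1|apply: H2].
Qed.

Lemma fsup_vmulp (p : mpoly K n) (w : mvec K n m) : fsup p -> vfs w -> vfs (vmulp p w).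
Proof.
move=> [s1 H1] [s2 H2].
exists [seq (y.1, mmul x y.2) | x <- s1, y <- s2] => [[i a]] /= /pmul_nz [d [h1 h2 h3]].
rewrite -(mmul_quo h3).
by apply: (allpairs_f (fun x (y : 'I_m * mon n) => (y.1, mmul x y.2)) (y := (i, mquo a d))); [apply: H1|apply: H2].
Qed.

Lemma fsup_vsub (u v : mvec K n m) : vfs u -> vfs v -> vfs (vsub u v).
Proof. exact: fsup_sub. Qed.

Lemma fsup_psub (p q : mpoly K n) : fsup p -> fsup q -> fsup (psub p q).
Proof. exact: fsup_sub. Qed.

Definition Pe (x : elt K n m) := fsup x.2 /\ vfs x.1.
Definition Inv (G : seq (elt K n m)) := forall j, Pe (Gat G j).

Lemma Pe_zelt : Pe (zelt K n m).
Proof. by split; [apply: fsup0|apply: fsup0]. Qed.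

Lemma Inv_In (s : seq (elt K n m)) : (forall x, List.In x s -> Pe x) -> Inv s.
Proof.
elim: s => [|x s IH] H j; first by rewrite /Gat nth_nil; apply: Pe_zelt.
case: j => [|j]; first by apply: H; left.
by apply: IH => y hy; apply: H; right.
Qed.

Lemma Inv_cat (s1 s2 : seq (elt K n m)) : Inv s1 -> Inv s2 -> Inv (s1 ++ s2).
Proof. by move=> h1 h2 j; rewrite /Gat nth_cat; case: ifP => _; [apply: h1|apply: h2]. Qed.

Lemma In_map_ex (A B : Type) (f : A -> B) (l : seq A) y : List.In y (map f l) -> exists x, y = f x.
Proof. elim: l => //= a l IH [<-|/IH] //; by exists a. Qed.

Lemma Inv_perm (s l : seq (elt K n m)) : Permutation s l -> (forall x, List.In x l -> Pe x) -> Inv s.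
Proof.
move=> P H; apply: Inv_In => x hx; apply: H; apply: Permutation_in hx; exact: P.
Qed.

End Fin.

Section Alg.
Variables (K : fieldType) (n m : nat) (lt : rel (mon n)) (ltM : rel ('I_m * mon n)).
Variable F : 'I_m -> (mon n -> K).

Lemma Pe_spoly (G : seq (elt K n m)) k l : Inv G -> Pe (spoly lt G k l).
Proof.
move=> I; have [f1 v1] := I k; have [f2 v2] := I l; split => /=.
  by apply: fsup_psub; apply: fsup_pmulm.
by apply: fsup_vsub; apply: fsup_vmulm.
Qed.

Lemma Pe_redstep (B : seq (elt K n m)) x y : Inv B -> Pe x -> redstep lt ltM B x y -> Pe y.
Proof.
move=> I [f1 v1] [j [a [b [_ /= [_ ->]]]]]; have [f2 v2] := I j; split => /=.
  by apply: fsup_psub => //; apply: fsup_pmulm.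
by apply: fsup_vsub => //; apply: fsup_vmulm.
Qed.

Lemma Pe_reduces (B : seq (elt K n m)) x y : Inv B -> Pe x -> reduces lt ltM B x y -> Pe y.
Proof.
move=> I Px R; elim: R Px => // x0 y0 z0 st _ IH P0; apply: IH; exact: Pe_redstep st.
Qed.

Lemma fsup_pone : fsup (@pone K n).
Proof. by exists [:: mone n] => a; rewrite /pone; case: ifP => [/eqP ->|]; rewrite ?eqxx ?inE. Qed.

Lemma In_new_syz (w : mvec K n m) h : (forall i, finsupp (F i)) -> vfs w -> fsup h ->
  forall x, List.In x (new_syz F w h) -> Pe x.
Proof.
move=> HF vw fh x hx; have [i ->] := In_map_ex hx; split; first exact: fsup0.
by apply: fsup_vsub; [apply: fsup_vsingle|exact: (fsup_vmulp (HF i) vw)].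
Qed.

Lemma Inv_reach G CP : (forall i, finsupp (F i)) -> reachable lt ltM F G CP -> Inv G.
Proof.
move=> HF; elim => {G CP}.
- move=> s P; apply: Inv_cat.
    apply: Inv_In => x hx; have [i ->] := In_map_ex hx; split; first exact: HF.
    by apply: fsup_vsingle; apply: fsup_pone.
  apply: (Inv_perm P) => x hx; have [p ->] := In_map_ex hx; split; first exact: fsup0.
  by apply: fsup_vsub; apply: fsup_vsingle; apply: HF.
- by [].
- move=> G CP p w h _ I _ kl _ _ R _; apply: Inv_cat => //.
  have [f1 v1] := Pe_reduces I (Pe_spoly _ _ I) R.
  by apply: Inv_In => x [<-|//]; split.
- move=> G CP p w h s _ I _ kl _ _ R _ P G'.
  have [f1 v1] := Pe_reduces I (Pe_spoly _ _ I) R.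
  apply: Inv_cat => //; apply: Inv_cat.
    exact: (Inv_perm P (In_new_syz HF v1 f1)).
  by apply: Inv_In => x [<-|//]; split.
Qed.

End Alg.

Section Red.
Variables (K : fieldType) (n m : nat) (lt : rel (mon n)) (ltM : rel ('I_m * mon n)).
Hypothesis Hlt : term_order lt.

Lemma lcE (p : mpoly K n) a : lpp lt p = Some a -> lc lt p = p a.
Proof. by rewrite /lc => ->. Qed.

Lemma mquo_dvd (a b : mon n) : mdvd (mquo a b) a.
Proof. by apply/mdvdP => i; rewrite ffunE; lia. Qed.

Lemma mquo_quo (a b : mon n) : mdvd b a -> mquo a (mquo a b) = b.
Proof. move/mdvdP => h; apply: mon_ext => i; rewrite !ffunE; have := h i; lia. Qed.

Lemma mmul_quo' (a b : mon n) : mdvd b a -> mmul (mquo a b) b = a.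
Proof. move/mdvdP => h; apply: mon_ext => i; rewrite !ffunE; have := h i; lia. Qed.

Lemma redstep_vlpp (B : seq (elt K n m)) x y : redstep lt ltM B x y -> vlpp ltM y.1 = vlpp ltM x.1.
Proof. by move=> [j [a [b [_ /= [E ->]]]]]. Qed.

Lemma reduces_vlpp (B : seq (elt K n m)) x y : reduces lt ltM B x y -> vlpp ltM y.1 = vlpp ltM x.1.
Proof. by elim => // x0 y0 z0 /redstep_vlpp E _ ->. Qed.

Lemma redstep_lpp (B : seq (elt K n m)) x y : redstep lt ltM B x y -> olt lt (lpp lt y.2) (lpp lt x.2).
Proof.
have [st mono _] := Hlt.
move=> [j [a [b [[_ _ ha hb dba] /= [_ ->]]]]] /=; rewrite ha; apply: lead_below => z.
have [hxa Hx] := lead_SomeE ha; have [hgb Hg] := lead_SomeE hb.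
rewrite (lcE ha) (lcE hb) /psub /pmulm.
case: (altP (z =P a)) => [->|za].
  by rewrite mquo_dvd mquo_quo // divfK // subrr eqxx.
case: (boolP (x.2 z != 0)) => [hz _|]; first exact: Hx.
rewrite negbK => /eqP ->; rewrite sub0r oppr_eq0; case: ifP => [dz|]; last by rewrite eqxx.
move=> h; have hg : (Gat B j).2 (mquo z (mquo a b)) != 0 by apply: contraNneq h => ->; rewrite mulr0.
suff: lt (mmul (mquo a b) (mquo z (mquo a b))) (mmul (mquo a b) b) by rewrite (mmul_quo dz) (mmul_quo' dba).
apply: mono.
case: (altP (mquo z (mquo a b) =P b)) => [e|ne]; last exact: Hg.
by move: za; rewrite -(mmul_quo dz) e mmul_quo' // eqxx.
Qed.

Lemma reduces_lpp (B : seq (elt K n m)) x y : reduces lt ltM B x y ->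
  y = x \/ olt lt (lpp lt y.2) (lpp lt x.2).
Proof.
have [st _ _] := Hlt.
elim => [x0 _|x0 y0 z0 /redstep_lpp h _ [->|h']]; [by left|by right|right].
exact (olt_trans st h' h).
Qed.

End Red.

Section Main.
Variables (K : fieldType) (n m : nat) (lt : rel (mon n)) (ltM : rel ('I_m * mon n)).
Hypothesis Hlt : term_order lt.
Hypothesis HM : mod_term_order ltM.

Lemma reduces_strict (B : seq (elt K n m)) x y : (exists z, redstep lt ltM B x z) ->
  reduces lt ltM B x y -> olt lt (lpp lt y.2) (lpp lt x.2).
Proof.
have [st _ _] := Hlt.
move=> [z hz] R; case: R hz => [x0 H hz|x0 y0 z0 st' R _]; first by case: (H z).
have h := redstep_lpp Hlt st'; case: (reduces_lpp Hlt R) => [->//|h'].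
exact (olt_trans st h' h).
Qed.

Lemma mon_arith (t x2 a2 b b' bk : mon n) : mdvd a2 (mmul t x2) -> mdvd b' b ->
  mquo (mmul t x2) a2 = mquo b b' ->
  mmul (mquo (mmul t x2) (mlcm x2 a2)) (mmul (mquo (mlcm x2 a2) a2) b') = b /\
  mmul (mquo (mmul t x2) (mlcm x2 a2)) (mmul (mquo (mlcm x2 a2) x2) bk) = mmul t bk.
Proof.
move=> /mdvdP h1 /mdvdP h2 E; split; apply: mon_ext => i; rewrite !ffunE;
  have := h1 i; have := h2 i; have := congr1 (fun f : mon n => f i) E; rewrite !ffunE /=; lia.
Qed.

Lemma vlpp0 : vlpp ltM (zelt K n m).1 = None.
Proof.
rewrite /vlpp; by case: (leadP ltM (fun x : 'I_m * mon n => (zelt K n m).1 x.1 x.2)) => [[-> _]|[a [_ [h _]]]] //; move: h; rewrite eqxx.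
Qed.

Lemma part2 (G : seq (elt K n m)) (k : nat) (t : mon n) (w : mvec K n m) (h : mpoly K n) :
     (k < size G)%N ->
     let tx := (vmulm 1 t (Gat G k).1, pmulm 1 t (Gat G k).2) in
     (exists z, redstep lt ltM G tx z) ->
     reduces lt ltM G tx (w, h) ->
     (exists j, (j < size G)%N /\
        exists a a' b b',
        [/\ vlpp ltM w = Some a, vlpp ltM (Gat G j).1 = Some a',
            lpp lt h = Some b & lpp lt (Gat G j).2 = Some b'] /\
        [/\ tdvd a' a, mdvd b' b, mquo a.2 a'.2 = mquo b b'
          & vlc ltM w / vlc ltM (Gat G j).1 = lc lt h / lc lt (Gat G j).2]) ->
     genrew lt ltM G t k.
Proof.
move=> hk tx ex Rd [j [hj [a [a' [b [b' [[ea ea' eb eb'] [da db eq _]]]]]]]].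
have hs := reduces_strict ex Rd; rewrite /= eb lpp_pmulm // in hs.
case hbk: (lpp lt (Gat G k).2) hs => [bk|] //= hs.
have hv := reduces_vlpp Rd; rewrite /= vlpp_vmulm // ea in hv.
case hx: (vlpp ltM (Gat G k).1) hv => [x|] //= [ax]; subst a.
split => //; exists j; split => //; first by rewrite ea' vlpp_vmulm // hx.
rewrite /gbrel ea' hx; cbv zeta; left; rewrite !lpp_pmulm // eb' hbk /=.
move: da; rewrite /tdvd /= => /andP [_ da].
have [E1 E2] := mon_arith bk da db eq.
apply: (mcancel (t := mquo (mmul t x.2) (mlcm x.2 a'.2))) => //.
by rewrite E1 E2.
Qed.


Lemma claimB (G : seq (elt K n m)) k l :
  let S := (spoly lt G k l).2 in let P := pmulm 1 (cpt lt G k l) (Gat G k).2 in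
  lpp lt S = lpp lt P \/ olt lt (lpp lt S) (lpp lt P).
Proof.
move=> S P; have [st _ _] := Hlt; rewrite /S /P /spoly /=.
set f := (Gat G k).2; set g := (Gat G l).2.
case hf: (lpp lt f) => [af|]; last first.
  have c0 : lc lt f / lc lt g = 0 by rewrite /lc hf mul0r.
  by left; apply: (lead_ext st) => y; rewrite /psub [pmulm (_ / _) _ _ _]pmulmE c0 mul0r subr0.
case hg: (lpp lt g) => [ag|]; last first.
  have c0 : lc lt f / lc lt g = 0 by rewrite /lc hg invr0 mulr0.
  by left; apply: (lead_ext st) => y; rewrite /psub [pmulm (_ / _) _ _ _]pmulmE c0 mul0r subr0.
right.
have eM1 : mmul (cpt lt G k l) af = mlcm af ag.
  rewrite /cpt -/f -/g /lppd hf hg /=; apply: mon_ext => i; rewrite !ffunE; lia.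
have eM2 : mmul (cpt lt G l k) ag = mlcm af ag.
  rewrite /cpt -/f -/g /lppd hf hg /=; apply: mon_ext => i; rewrite !ffunE; lia.
have hP : lpp lt (pmulm 1 (cpt lt G k l) f) = Some (mlcm af ag) by rewrite lpp_pmulm // hf /= eM1.
have hQ : lpp lt (pmulm 1 (cpt lt G l k) g) = Some (mlcm af ag) by rewrite lpp_pmulm // hg /= eM2.
rewrite hP; apply: lead_below => y.
have [_ HP] := lead_SomeE hP; have [_ HQ] := lead_SomeE hQ.
have [hga _] := lead_SomeE hg.
rewrite /psub [pmulm (_ / _) _ _ _]pmulmE.
case: (altP (y =P mlcm af ag)) => [->|yM].
  have hPM : pmulm 1 (cpt lt G k l) f (mlcm af ag) = f af by rewrite -eM1 /pmulm mdvd_mmul mquo_mmul mul1r.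
  have hQM : pmulm 1 (cpt lt G l k) g (mlcm af ag) = g ag by rewrite -eM2 /pmulm mdvd_mmul mquo_mmul mul1r.
  by rewrite hPM hQM (lcE hf) (lcE hg) divfK // subrr eqxx.
case: (boolP (pmulm 1 (cpt lt G k l) f y != 0)) => [hy _|]; first exact: HP.
rewrite negbK => /eqP ->; rewrite sub0r oppr_eq0 => h; apply: HQ yM.
by apply: contraNneq h => ->; rewrite mulr0.
Qed.


Lemma claimA (G : seq (elt K n m)) k l sg : Inv G -> cp_regular lt ltM G k l ->
  cpsig lt ltM G k l = Some sg -> vlpp ltM (spoly lt G k l).1 = Some sg.
Proof.
have [st _ _] := HM.
move=> I reg hs; rewrite /cp_regular hs in reg.
set A := fun y : 'I_m * mon n => vmulm 1 (cpt lt G k l) (Gat G k).1 y.1 y.2.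
set Bf := fun y : 'I_m * mon n => vmulm 1 (cpt lt G l k) (Gat G l).1 y.1 y.2.
have [hA HA] : is_lead ltM A sg := lead_SomeE hs.
have HB : forall y, Bf y != 0 -> ltM y sg.
  move=> y hy; case: (leadP ltM Bf) => [[hN _]|[s' [hs' [_ Hs']]]].
    have fB : fsup Bf := fsup_vmulm 1 (cpt lt G l k) (I l).2.
    by rewrite (lead_fin_None st fB hN) eqxx in hy.
  have reg' : olt ltM (lead ltM Bf) (Some sg) := reg; rewrite hs' /= in reg'.
  case: (altP (y =P s')) => [->//|ys]; exact: (lt_tr st (Hs' y hy ys) reg').
set c := lc lt (Gat G k).2 / lc lt (Gat G l).2.
have E : forall y, A y - c * Bf y = (spoly lt G k l).1 y.1 y.2.
  by move=> y; rewrite /spoly /= /vsub /psub /A /Bf /vmulm [pmulm c _ _ _]pmulmE.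
apply: (lead_Some st); apply: (is_lead_ext E).
have B0 : Bf sg = 0 by apply/eqP; apply: contraT => /HB; rewrite lt_irr.
split; first by rewrite B0 mulr0 subr0.
move=> y hy ys; case: (boolP (A y != 0)) => [hay|]; first exact: HA.
rewrite negbK => /eqP hay; apply: HB; apply: contraNneq hy => ->.
by rewrite hay mulr0 subrr.
Qed.

End Main.

Unset Implicit Arguments.
Theorem mainTheorem5 (K : fieldType) (n m : nat)
  (lt : rel (mon n)) (ltM : rel ('I_m * mon n))
  (F : 'I_m -> (mon n -> K)) :
  term_order lt -> mod_term_order ltM ->
  (forall i, finsupp (F i)) ->
  forall (G : seq (elt K n m)) (CP : seq (nat * nat)),
  reachable lt ltM F G CP ->
  (* (i) admissibility *)
  (forall (p : nat) (w : mvec K n m) (h : mpoly K n) (s : seq (elt K n m)),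
     (p < size CP)%N ->
     let kl := nth (0%N, 0%N) CP p in
     cp_regular lt ltM G kl.1 kl.2 -> ~ cp_genrew lt ltM G kl.1 kl.2 ->
     reduces lt ltM G (spoly lt G kl.1 kl.2) (w, h) ->
     (if pnz h then Permutation s (new_syz F w h) else s = [::]) ->
     let G' := G ++ s ++ [:: (w, h)] in
     gbrel lt ltM G' (size G' - 1) kl.1)
  /\
  (* (ii) eventually super top-reducible implies gen-rewritable *)
  (forall (k : nat) (t : mon n) (w : mvec K n m) (h : mpoly K n),
     (k < size G)%N -> pnz (Gat G k).2 ->
     let tx := (vmulm 1 t (Gat G k).1, pmulm 1 t (Gat G k).2) in
     (exists z, redstep lt ltM G tx z) ->
     reduces lt ltM G tx (w, h) ->
     (exists j, (j < size G)%N /\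
        exists a a' b b',
        [/\ vlpp ltM w = Some a, vlpp ltM (Gat G j).1 = Some a',
            lpp lt h = Some b & lpp lt (Gat G j).2 = Some b'] /\
        [/\ tdvd a' a, mdvd b' b, mquo a.2 a'.2 = mquo b b'
          & vlc ltM w / vlc ltM (Gat G j).1 = lc lt h / lc lt (Gat G j).2]) ->
     genrew lt ltM G t k).
Proof.
move=> Hlt HM HF G CP R; have I := Inv_reach HF R.
have [st _ _] := Hlt.
split; last first.
  by move=> k t w h hk _; apply: part2.
move=> p w h s hp kl reg _ Rd _ G'.
have reg0 := reg.
move: reg; rewrite /cp_regular.
case hsg: (cpsig lt ltM G kl.1 kl.2) => [sg|]; last by case: (cpsig _ _ _ _ _).
move=> _.
have hA := claimA HM I reg0 hsg.
move: hsg; rewrite /cpsig vlpp_vmulm //.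
case hx: (vlpp ltM (Gat G kl.1).1) => [x|] //= [esg]; subst sg.
have hk : (kl.1 < size G)%N.
  rewrite ltnNge; apply/negP => hge; move: hx; rewrite /Gat nth_default // vlpp0 //.
have hw : vlpp ltM w = Some (tmul (cpt lt G kl.1 kl.2) x).
  by rewrite -hA -(reduces_vlpp Rd).
have eG1 : Gat G' (size G' - 1) = (w, h).
  by rewrite /G' catA /Gat size_cat /= addn1 subn1 /= nth_cat ltnn subnn.
have eG2 : Gat G' kl.1 = Gat G kl.1 by rewrite /G' /Gat nth_cat hk.
rewrite /gbrel eG1 eG2 /= hw hx; cbv zeta.
set tf := cpt lt G kl.1 kl.2.
have q1 : mquo (mlcm x.2 (mmul tf x.2)) (mmul tf x.2) = mone n.
  by apply: mon_ext => i; rewrite !ffunE; lia.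
have q2 : mquo (mlcm x.2 (mmul tf x.2)) x.2 = tf.
  by apply: mon_ext => i; rewrite !ffunE; lia.
rewrite /tmul /= q1 q2.
have -> : lpp lt (pmulm 1 (mone n) h) = lpp lt h.
  by apply: (lead_ext st) => y; rewrite /pmulm mdvd1 mquo1 mul1r.
have hB := claimB Hlt G kl.1 kl.2; rewrite /= -/tf in hB.
have hk' : (kl.1 < size G' - 1)%N by rewrite /G' !size_cat /=; lia.
case: (reduces_lpp Hlt Rd) => [[_ ->]|hr].
  by case: hB => [->|]; [right|left].
left; case: hB => [<-|hB] //; exact (olt_trans st hr hB).
Qed.
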